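(* Let $L$ be a finite-dimensional Lie algebra over a field $K$ of characteristic $\neq 2$. The following are equivalent: (i) $L$ has an idempotent Hom-Lie structure $\varphi$ (i.e. $\varphi^2=\varphi$) which is different from the zero map and from the identity map; (ii) $L$ decomposes as a direct sum of vector spaces $L = A \oplus B$ with $A \neq 0$, $B \neq 0$, $[[A,A],B] = 0$ and $[[B,B],A] = 0$.
   Context: A Hom-Lie structure on a Lie algebra $L$ is a linear map $\varphi: L \to L$ satisfying $[[x,y],\varphi(z)] + [[z,x],\varphi(y)] + [[y,z],\varphi(x)] = 0$ for all $x,y,z \in L$. *)

(* Defs.v *)
From HB Require Import structures.
From mathcomp Require Import all_boot all_order all_algebra.
Set Implicit Arguments. Unset Strict Implicit. Unset Printing Implicit Defensive.
Import GRing.Theory.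
Local Open Scope ring_scope.

Definition lie_bracket (K : fieldType) (L : vectType K) (br : L -> L -> L) : Prop :=
  [/\ (forall (a : K) (x y z : L), br (a *: x + y) z = a *: br x z + br y z),
      (forall (a : K) (x y z : L), br z (a *: x + y) = a *: br z x + br z y),
      (forall x : L, br x x = 0) &
      (forall x y z : L, br x (br y z) + br y (br z x) + br z (br x y) = 0)].

Definition hom_lie_structure (K : fieldType) (L : vectType K)
    (br : L -> L -> L) (phi : 'End(L)) : Prop :=
  forall x y z : L,
    br (br x y) (phi z) + br (br z x) (phi y) + br (br y z) (phi x) = 0.

(* Main.v *)
Require Import Defs.
From HB Require Import structures.
From mathcomp Require Import all_boot all_order all_algebra.
Import GRing.Theory.
Local Open Scope ring_scope.
Set Implicit Arguments. Unset Strict Implicit.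

Lemma add6 (V : zmodType) (a a' b b' c c' : V) :
  (a + a') + (b + b') + (c + c') = (a + b + c) + (a' + b' + c').
Proof. by rewrite [X in X + _]addrACA [LHS]addrACA. Qed.

Section Core.
Variables (K : fieldType) (L : vectType K) (br : L -> L -> L).
Hypothesis hbr : lie_bracket br.

Lemma brDl x y z : br (x + y) z = br x z + br y z.
Proof. have := hbr; rewrite /lie_bracket; case=> h _ _ _. by rewrite -[x]scale1r h !scale1r. Qed.
Lemma brDr x y z : br z (x + y) = br z x + br z y.
Proof. by have := hbr; rewrite /lie_bracket; case=>  _ h _ _; rewrite -[x]scale1r h !scale1r. Qed.
Lemma br0l z : br 0 z = 0.
Proof. have h := brDl 0 0 z; rewrite addr0 in h; apply: (addrI (br 0 z)); by rewrite addr0 -h. Qed.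
Lemma br0r z : br z 0 = 0.
Proof. have h := brDr 0 0 z; rewrite addr0 in h; apply: (addrI (br z 0)); by rewrite addr0 -h. Qed.
Lemma br_anti u v : br u v = - br v u.
Proof.
have := hbr; rewrite /lie_bracket; case=>  _ _ ha _.
have := ha (u + v); rewrite brDl !brDr !ha add0r addr0 => /eqP.
by rewrite addr_eq0 => /eqP.
Qed.
Lemma rjac x y z : br (br x y) z + br (br y z) x + br (br z x) y = 0.
Proof.
have := hbr; rewrite /lie_bracket; case=>  _ _ _ hj.
rewrite (br_anti (br x y)) (br_anti (br y z)) (br_anti (br z x)).
rewrite -!opprD -[RHS]oppr0; congr (- _).
by rewrite -(hj x y z) -addrA addrC.
Qed.

Definition T (phi : L -> L) x y z :=
  br (br x y) (phi z) + br (br z x) (phi y) + br (br y z) (phi x).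

Lemma T_rot phi x y z : T phi x y z = T phi y z x.
Proof. by rewrite /T addrC addrA. Qed.

Lemma T_add1 (phi : 'End(L)) x x' y z :
  T phi (x + x') y z = T phi x y z + T phi x' y z.
Proof.
rewrite /T brDl brDl brDr brDl linearD /= brDr.
by rewrite add6 .
Qed.
End Core.

Section Core2.
Variables (K : fieldType) (L : vectType K) (br : L -> L -> L).
Hypothesis hbr : lie_bracket br.
Variables (A B : {vspace L}) (phi : 'End(L)).
Hypothesis hAA : forall a1 a2 b, a1 \in A -> a2 \in A -> b \in B -> br (br a1 a2) b = 0.
Hypothesis hBB : forall b1 b2 a, b1 \in B -> b2 \in B -> a \in A -> br (br b1 b2) a = 0.
Hypothesis phiA : forall a, a \in A -> phi a = a.
Hypothesis phiB : forall b, b \in B -> phi b = 0.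
Hypothesis decA : forall x, phi x \in A.
Hypothesis decB : forall x, x - phi x \in B.

Let P u := u \in A \/ u \in B.

Lemma T_AAB u v w : u \in A -> v \in A -> w \in B -> T br phi u v w = 0.
Proof.
move=> hu hv hw; rewrite /T (phiB hw) (phiA hu) (phiA hv) (br0r hbr) add0r addrC.
have := rjac hbr v w u; by rewrite (hAA hu hv hw) addr0.
Qed.

Lemma T_ABB u v w : u \in A -> v \in B -> w \in B -> T br phi u v w = 0.
Proof.
move=> hu hv hw; rewrite /T (phiB hw) (phiA hu) (phiB hv) !(br0r hbr) ?add0r ?addr0.
exact: hBB.
Qed.

Lemma T_pure u v w : P u -> P v -> P w -> T br phi u v w = 0.
Proof.
move=> [hu|hu] [hv|hv] [hw|hw].
- by rewrite /T !phiA // [X in X + _]addrC (rjac hbr).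
- exact: T_AAB.
- by rewrite T_rot T_rot; apply: T_AAB.
- exact: T_ABB.
- by rewrite T_rot; apply: T_AAB.
- by rewrite T_rot; apply: T_ABB.
- by rewrite T_rot T_rot; apply: T_ABB.
- by rewrite /T !phiB // !(br0r hbr) !addr0.
Qed.

Lemma T_split x y z : T br phi x y z = T br phi (phi x) y z + T br phi (x - phi x) y z.
Proof. by rewrite -T_add1 // addrCA subrr addr0. Qed.

Lemma PA x : P (phi x). Proof. by left. Qed.
Lemma PB x : P (x - phi x). Proof. by right. Qed.

Lemma T_all x y z : T br phi x y z = 0.
Proof.
have L2 u v w : P u -> P v -> T br phi u v w = 0.
  move=> hu hv; rewrite T_rot T_rot T_split.
  by rewrite (T_pure (PA w) hu hv) (T_pure (PB w) hu hv) addr0.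
have L3 u v w : P u -> T br phi u v w = 0.
  move=> hu; have R a : T br phi a w u = T br phi u a w by rewrite T_rot T_rot.
  by rewrite T_rot T_split !R (L2 _ _ _ hu (PA v)) (L2 _ _ _ hu (PB v)) addr0.
by rewrite T_split (L3 _ _ _ (PA x)) (L3 _ _ _ (PB x)) addr0.
Qed.
End Core2.

Theorem lemma2p2 (K : fieldType) (L : vectType K) (br : L -> L -> L) :
  (2 \notin [pchar K])%N ->
  lie_bracket br ->
  (exists phi : 'End(L),
      [/\ hom_lie_structure br phi, (phi \o phi)%VF = phi,
          phi != 0 & phi != \1%VF])
  <->
  (exists A B : {vspace L},
      [/\ (A + B)%VS = fullv, directv (A + B)%VS,
          A != 0%VS /\ B != 0%VS,
          (forall a1 a2 b, a1 \in A -> a2 \in A -> b \in B -> br (br a1 a2) b = 0) &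
          (forall b1 b2 a, b1 \in B -> b2 \in B -> a \in A -> br (br b1 b2) a = 0)]).
Proof.
move=> _ hbr; split.
- case=> phi [hT hid phi0 phi1].
  have pp x : phi (phi x) = phi x by rewrite -comp_lfunE hid.
  have phiA a : a \in limg phi -> phi a = a.
    by case/memv_imgP => w _ ->; rewrite pp.
  have phiB b : b \in lker phi -> phi b = 0 by rewrite memv_ker => /eqP.
  exists (limg phi), (lker phi); split.
  + apply/eqP; rewrite eqEsubv subvf /=; apply/subvP => v _.
    have -> : v = phi v + (v - phi v) by rewrite addrCA subrr addr0.
    by apply: memv_add; rewrite ?memv_img ?memvf // memv_ker linearB /= pp subrr.
  + apply/directv_addP/eqP; rewrite -subv0; apply/subvP => v /memv_capP [hA hB].
    by rewrite memv0 -(phiA _ hA) phiB.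
  + split.
    * apply: contraNneq phi0 => h; apply/eqP/lfunP => x.
      by rewrite zero_lfunE; apply/eqP; rewrite -memv0 -h memv_img ?memvf.
    * apply: contraNneq phi1 => h; apply/eqP/lfunP => x.
      rewrite id_lfunE; apply/eqP; rewrite -subr_eq0 -memv0 -h memv_ker.
      by rewrite linearB /= pp subrr.
  + move=> a1 a2 b h1 h2 hb.
    have := hT a1 a2 b; rewrite (phiB _ hb) (phiA _ h1) (phiA _ h2) (br0r hbr) add0r => h.
    have := rjac hbr a2 b a1; by rewrite [X in X + _]addrC h add0r.
  + move=> b1 b2 a h1 h2 ha.
    have := hT b1 b2 a; by rewrite (phiB _ h1) (phiB _ h2) (phiA _ ha) !(br0r hbr) !addr0.
- case=> A [B [hfull /directv_addP cap [nA nB] hAA hBB]].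
  pose phi := daddv_pi A B.
  have phiA a : a \in A -> phi a = a by apply: daddv_pi_id.
  have inAB w : w \in (A + B)%VS by rewrite hfull memvf.
  have hadd w : phi w + daddv_pi B A w = w by apply: daddv_pi_add.
  have phiB b : b \in B -> phi b = 0.
    move=> hb; apply: (addIr b); rewrite add0r.
    rewrite -{3}(hadd b) (@daddv_pi_id _ _ B A b) //; by rewrite capvC.
  have decA x : phi x \in A by apply: memv_pi.
  have decB x : x - phi x \in B.
    by rewrite -{1}(hadd x) addrC addKr memv_pi.
  exists phi; split.
  + move=> x y z; exact: (T_all hbr hAA hBB phiA phiB decA decB).
  + by apply/lfunP => x; rewrite comp_lfunE daddv_pi_proj.
  + apply: contraNneq nA => h; rewrite -vpick0; apply/eqP.
    by rewrite -(phiA _ (memv_pick A)) h zero_lfunE.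
  + apply: contraNneq nB => h; rewrite -vpick0; apply/eqP.
    by rewrite -(phiB _ (memv_pick B)) h id_lfunE.
Qed.
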